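(* Let $c\ge0$. Let $w^*$ be an optimal solution, with optimal value $\lambda_n^*$, of $$\min_{w,\lambda_n}\ \lambda_n\quad\text{s.t.}\quad \sum_{\{i,j\}\in E_3}w_{ij}L_{ij}+L_0-\lambda_nI\preceq 0,\ \ \sum_{\{i,j\}\in E_3}w_{ij}\ge c,\ \ w_{ij}\ge0,$$ and let $(\xi,v_1,\dots,v_n)$ be an optimal solution of the embedding problem $$\max_{v_i\in\mathbb{R}^n,\ \xi\in\mathbb{R}}\ c\xi+\sum_{\{i,j\}\in E_1\cup E_2}\|v_i-v_j\|^2\quad\text{s.t.}\quad \|v_i-v_j\|^2\ge\xi\ \ \forall\{i,j\}\in E_3,\ \ \sum_{i\in V}\|v_i\|^2=1.$$ Then for every $p\in\mathbb{R}^n$ the projected vector $y=(p^Tv_1,\dots,p^Tv_n)^T$ satisfies $L(w^* )y=\lambda_n^*y$, where $L(w^* )=\sum_{\{i,j\}\in E_3}w^*_{ij}L_{ij}+L_0$; i.e. projecting the optimal embedding onto a one-dimensional subspace yields an eigenvector for the largest eigenvalue $\lambda_n^*$.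
   Context: A multiplex network consists of two layers $G_1=(V_1,E_1)$ and $G_2=(V_2,E_2)$, simple undirected graphs with $|V_1|=|V_2|=N$; vertices of $G_1$ are numbered $1,\dots,N$, those of $G_2$ are numbered $N+1,\dots,2N$, $n=2N$, $V=V_1\cup V_2$. The interlayer edges form the perfect matching $E_3=\{\{i,N+i\}:i=1,\dots,N\}$ with nonnegative weights $w_{ij}$. $L_{ij}=(\delta_i-\delta_j)(\delta_i-\delta_j)^T$, $\delta_i$ the $i$-th standard basis vector of $\mathbb{R}^n$; $L_0=\sum_{\{i,j\}\in E_1\cup E_2}L_{ij}$. *)

(* Defs.v *)
From HB Require Import structures.
From mathcomp Require Import all_boot all_order all_algebra.
From mathcomp Require Import reals.
Set Implicit Arguments. Unset Strict Implicit. Unset Printing Implicit Defensive.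
Import Order.TTheory GRing.Theory Num.Theory.
Local Open Scope ring_scope.

Section Multiplex.
Variable R : realType.
Variable N : nat.

(* n = 2N vertices: layer 1 = lshift N i (vertex i+1 in the paper),
   layer 2 = rshift N i (vertex N+i+1 in the paper), for i : 'I_N. *)
Notation n := (N + N)%N.

Definition lay1 (i : 'I_N) : 'I_n := lshift N i.
Definition lay2 (i : 'I_N) : 'I_n := rshift N i.

Definition delta (i : 'I_n) : 'cV[R]_n := delta_mx i 0.

Definition Lij (i j : 'I_n) : 'M[R]_n :=
  (delta i - delta j) *m (delta i - delta j)^T.

Definition edge_sum (V : nmodType) (e : rel 'I_N) (f : 'I_N -> 'I_N -> V) : V :=
  \sum_(i : 'I_N) \sum_(j : 'I_N | (i < j)%N && e i j) f i j.

Definition L0 (e1 e2 : rel 'I_N) : 'M[R]_n :=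
  edge_sum e1 (fun i j => Lij (lay1 i) (lay1 j))
  + edge_sum e2 (fun i j => Lij (lay2 i) (lay2 j)).

(* L(w) = sum_{ {i,N+i} in E_3 } w_i L_{i,N+i} + L_0 *)
Definition Lw (e1 e2 : rel 'I_N) (w : 'I_N -> R) : 'M[R]_n :=
  \sum_(i : 'I_N) w i *: Lij (lay1 i) (lay2 i) + L0 e1 e2.

Definition negsemidef (A : 'M[R]_n) : Prop :=
  forall x : 'cV[R]_n, (x^T *m A *m x) 0 0 <= 0.

Definition sdp_feasible (c : R) (e1 e2 : rel 'I_N) (w : 'I_N -> R) (lam : R) : Prop :=
  [/\ negsemidef (Lw e1 e2 w - lam%:M), c <= \sum_(i : 'I_N) w i
    & forall i, 0 <= w i].

Definition sdp_optimal (c : R) (e1 e2 : rel 'I_N) (w : 'I_N -> R) (lam : R) : Prop :=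
  sdp_feasible c e1 e2 w lam /\
  forall w' lam', sdp_feasible c e1 e2 w' lam' -> lam <= lam'.

Definition sqnorm (x : 'cV[R]_n) : R := \sum_(k : 'I_n) x k 0 ^+ 2.

Definition emb_feasible (e1 e2 : rel 'I_N) (xi : R) (v : 'I_n -> 'cV[R]_n) : Prop :=
  (forall i : 'I_N, xi <= sqnorm (v (lay1 i) - v (lay2 i))) /\
  \sum_(i : 'I_n) sqnorm (v i) = 1.

Definition emb_obj (c : R) (e1 e2 : rel 'I_N) (xi : R) (v : 'I_n -> 'cV[R]_n) : R :=
  c * xi + (edge_sum e1 (fun i j => sqnorm (v (lay1 i) - v (lay1 j)))
            + edge_sum e2 (fun i j => sqnorm (v (lay2 i) - v (lay2 j)))).

Definition emb_optimal (c : R) (e1 e2 : rel 'I_N) (xi : R) (v : 'I_n -> 'cV[R]_n) : Prop :=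
  emb_feasible e1 e2 xi v /\
  forall xi' v', emb_feasible e1 e2 xi' v' -> emb_obj c e1 e2 xi' v' <= emb_obj c e1 e2 xi v.

Definition proj (p : 'cV[R]_n) (v : 'I_n -> 'cV[R]_n) : 'cV[R]_n :=
  \col_(i < n) (p^T *m v i) 0 0.

End Multiplex.

(* Main.v *)
Require Import Defs.
From HB Require Import structures.
From mathcomp Require Import all_boot all_order all_algebra.
From mathcomp Require Import reals.
From mathcomp Require Import ring lra.
From Stdlib Require Import Classical.
Import Order.TTheory GRing.Theory Num.Theory.
Local Open Scope ring_scope.
Set Implicit Arguments. Unset Strict Implicit. Unset Printing Implicit Defensive.

Section Aux.
Variable R : realType.
Variable N : nat.
Local Notation n := (N + N)%N.

Definition Q (A : 'M[R]_n) (z : 'cV[R]_n) : R := (z^T *m A *m z) 0 0.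

Lemma QD A B z : Q (A + B) z = Q A z + Q B z.
Proof. by rewrite /Q mulmxDr mulmxDl mxE. Qed.

Lemma Q0 z : Q 0 z = 0.
Proof. by rewrite /Q mulmx0 mul0mx mxE. Qed.

Lemma QZ a A z : Q (a *: A) z = a * Q A z.
Proof. by rewrite /Q -scalemxAr -scalemxAl mxE. Qed.

Lemma QN A z : Q (- A) z = - Q A z.
Proof. by rewrite -scaleN1r QZ mulN1r. Qed.

Lemma QB A B z : Q (A - B) z = Q A z - Q B z.
Proof. by rewrite QD QN. Qed.

Lemma Qsum (I : Type) (r : seq I) (P : pred I) (F : I -> 'M[R]_n) z :
  Q (\sum_(i <- r | P i) F i) z = \sum_(i <- r | P i) Q (F i) z.
Proof. exact: (big_morph (fun A => Q A z) (fun A B => QD A B z) (Q0 z)). Qed.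

Lemma Qscale A s z : Q A (s *: z) = s ^+ 2 * Q A z.
Proof.
rewrite /Q -scalemxAr [(s *: z)^T]linearZ /= -!scalemxAl !mxE expr2 mulrA.
by [].
Qed.

Lemma QE A z : Q A z = \sum_i \sum_j z i 0 * A i j * z j 0.
Proof.
rewrite /Q mxE exchange_big /=; apply: eq_bigr => j _.
rewrite mxE mulr_suml; apply: eq_bigr => i _; by rewrite !mxE.
Qed.

Lemma Q1 z : Q 1%:M z = \sum_i z i 0 ^+ 2.
Proof.
rewrite QE; apply: eq_bigr => i _.
rewrite (bigD1 i) //= big1 ?addr0; first by rewrite mxE eqxx mulr1 expr2.
by move=> j /negPf ji; rewrite mxE eq_sym ji mulr0 mul0r.
Qed.

Lemma QLij a b z : Q (Lij R a b) z = (z a 0 - z b 0) ^+ 2.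
Proof.
rewrite /Q /Lij /delta !mulmxA.
have -> : z^T *m (delta_mx a 0 - delta_mx b 0) = (row a z - row b z)^T.
  by rewrite !rowE [RHS]linearB /= !trmx_mul !trmx_delta mulmxBr.
rewrite -mulmxA.
have -> : (delta_mx a 0 - delta_mx b 0)^T *m z = row a z - row b z.
  by rewrite linearB /= !trmx_delta mulmxBl -!rowE.
by rewrite mxE big_ord1 !mxE expr2.
Qed.


Definition S (A : 'M[R]_n) (T : nat) (W : nat -> 'cV[R]_n) : R :=
  \sum_(k < T) Q A (W k).

Lemma SD A B T W : S (A + B) T W = S A T W + S B T W.
Proof. by rewrite /S -big_split; apply: eq_bigr => k _; rewrite QD. Qed.

Lemma S0 T W : S 0 T W = 0.
Proof. by rewrite /S big1 // => k _; rewrite Q0. Qed.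

Lemma SZ a A T W : S (a *: A) T W = a * S A T W.
Proof. by rewrite /S mulr_sumr; apply: eq_bigr => k _; rewrite QZ. Qed.

Lemma SB A B T W : S (A - B) T W = S A T W - S B T W.
Proof. by rewrite /S -sumrB; apply: eq_bigr => k _; rewrite QB. Qed.

Lemma Ssum (I : Type) (r : seq I) (P : pred I) (F : I -> 'M[R]_n) T W :
  S (\sum_(i <- r | P i) F i) T W = \sum_(i <- r | P i) S (F i) T W.
Proof. exact: (big_morph (fun A => S A T W) (fun A B => SD A B T W) (S0 T W)). Qed.

Lemma S_edge (e : rel 'I_N) (F : 'I_N -> 'I_N -> 'M[R]_n) T W :
  S (edge_sum e F) T W = edge_sum e (fun i j => S (F i j) T W).
Proof. by rewrite /edge_sum Ssum; apply: eq_bigr => i _; rewrite Ssum. Qed.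

Definition zf (v : 'I_n -> 'cV[R]_n) (k : nat) : 'cV[R]_n :=
  \col_a (if @insub _ (fun k => (k < n)%N) 'I_n k is Some k' then v a k' 0 else 0).

Definition ve (g : nat -> 'cV[R]_n) (a : 'I_n) : 'cV[R]_n :=
  \col_(k < n) g k a 0.

Lemma sqnorm_S v a b : sqnorm (v a - v b) = S (Lij R a b) n (zf v).
Proof.
rewrite /sqnorm /S; apply: eq_bigr => k _.
by rewrite QLij !mxE valK.
Qed.

Lemma sqnorm_sum v : \sum_a sqnorm (v a) = S 1%:M n (zf v).
Proof.
rewrite /sqnorm /S exchange_big /=; apply: eq_bigr => k _.
by rewrite Q1; apply: eq_bigr => a _; rewrite mxE valK.
Qed.

Lemma S_ve A g : S A n (zf (ve g)) = S A n g.
Proof.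
rewrite /S; apply: eq_bigr => k _; congr Q.
by apply/matrixP => a j; rewrite !mxE valK ord1 /ve mxE.
Qed.

Lemma S_L0 e1 e2 v :
  S (L0 R e1 e2) n (zf v) =
  edge_sum e1 (fun i j => sqnorm (v (lay1 i) - v (lay1 j)))
  + edge_sum e2 (fun i j => sqnorm (v (lay2 i) - v (lay2 j))).
Proof.
rewrite /L0 SD !S_edge; congr (_ + _); rewrite /edge_sum;
  apply: eq_bigr => i _; apply: eq_bigr => j _; by rewrite sqnorm_S.
Qed.

Lemma S_Lw e1 e2 w T W :
  S (Lw e1 e2 w) T W = \sum_i w i * S (Lij R (lay1 i) (lay2 i)) T W + S (L0 R e1 e2) T W.
Proof. by rewrite /Lw SD Ssum; congr (_ + _); apply: eq_bigr => i _; rewrite SZ. Qed.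


Lemma scal_lemma (a b : R) : 0 <= a -> (forall t : R, 0 <= 2 * t * b + t ^+ 2 * a) -> b = 0.
Proof.
move=> a0 H; have := H (- b / (a + 1)).
have d0 : a + 1 != 0 by rewrite gt_eqF // ltr_wpDl.
have -> : 2 * (- b / (a + 1)) * b + (- b / (a + 1)) ^+ 2 * a
          = - (b ^+ 2 * (a + 2)) / (a + 1) ^+ 2 by field.
rewrite pmulr_lge0 ?invr_gt0 ?exprn_gt0 ?ltr_wpDl // oppr_ge0 => h.
have : b ^+ 2 * (a + 2) == 0.
  by rewrite eq_le h mulr_ge0 ?sqr_ge0 ?addr_ge0.
by rewrite mulf_eq0 sqrf_eq0 (gt_eqF (ltr_wpDl a0 _)) // orbF => /eqP.
Qed.

Lemma Q_expand M x y t : M^T = M ->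
  Q M (x + t *: y) = Q M x + 2 * t * (y^T *m M *m x) 0 0 + t ^+ 2 * Q M y.
Proof.
move=> hM.
have hs : (x^T *m M *m y) 0 0 = (y^T *m M *m x) 0 0.
  by rewrite -[x^T *m M *m y]trmxK [in LHS]mxE !trmx_mul trmxK hM mulmxA.
rewrite /Q [(x + t *: y)^T]linearD /= [(t *: y)^T]linearZ /= !mulmxDl !mulmxDr.
rewrite -!scalemxAl -!scalemxAr !mxE; move: hs; rewrite !mxE => ->; ring.
Qed.

Lemma psd0 M x : M^T = M -> (forall y, 0 <= Q M y) -> Q M x = 0 -> M *m x = 0.
Proof.
move=> hM hpos hx.
set y := M *m x.
have hb : (y^T *m M *m x) 0 0 = 0.
  apply: (scal_lemma (hpos y)) => t.
  by have := hpos (x + t *: y); rewrite Q_expand // hx add0r.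
have : \sum_i (y i 0) ^+ 2 = 0.
  rewrite -[RHS]hb -mulmxA mxE; apply: eq_bigr => i _; by rewrite [y^T 0 i]mxE expr2.
move/psumr_eq0P => h0; apply/matrixP => i j.
rewrite ord1 [RHS]mxE; apply/eqP; rewrite -sqrf_eq0; apply/eqP.
by apply: h0 => // k _; rewrite sqr_ge0.
Qed.


Lemma trLij (a b : 'I_n) : (Lij R a b)^T = Lij R a b.
Proof. by rewrite /Lij trmx_mul trmxK. Qed.

Lemma trLw (e1 e2 : rel 'I_N) (w : 'I_N -> R) : (Lw e1 e2 w)^T = Lw e1 e2 w.
Proof.
rewrite /Lw /L0 /edge_sum !linearD /= !linear_sum /=.
congr (_ + (_ + _)).
- by apply: eq_bigr => i _; rewrite linearZ /= trLij.
- by apply: eq_bigr => i _; rewrite linear_sum; apply: eq_bigr => j _; apply: trLij.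
- by apply: eq_bigr => i _; rewrite linear_sum; apply: eq_bigr => j _; apply: trLij.
Qed.

Lemma stepA (e1 e2 : rel 'I_N) (c : R) w lam xi v (p : 'cV[R]_n) : 0 <= c -> sdp_feasible c e1 e2 w lam ->
  emb_feasible e1 e2 xi v -> lam <= emb_obj c e1 e2 xi v ->
  Lw e1 e2 w *m proj p v = lam *: proj p v.
Proof.
move=> hc [hneg hsum hw0] [hxi hv1] hobj.
set M := lam%:M - Lw e1 e2 w.
have hMs : M^T = M by rewrite /M linearB /= tr_scalar_mx trLw.
have hpos : forall y, 0 <= Q M y.
  move=> y; have := hneg y; rewrite -/(Q _ y).
  by rewrite /M -opprB QN oppr_le0.
have hS : S M n (zf v) <= 0.
  rewrite /M SB -scalemx1 SZ -sqnorm_sum hv1 mulr1 S_Lw subr_le0.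
  move: hobj; rewrite /emb_obj -S_L0 => hobj; apply: (le_trans hobj).
  rewrite lerD2r.
  have hS : forall i, xi <= S (Lij R (lay1 i) (lay2 i)) n (zf v).
    by move=> i; rewrite -sqnorm_S.
  case: (lerP 0 xi) => hx.
  - apply: le_trans (_ : \sum_i w i * xi <= _).
      by rewrite -mulr_suml; apply: ler_wpM2r.
    by apply: ler_sum => i _; apply: ler_wpM2l.
  - apply: le_trans (_ : 0 <= _); first by rewrite mulr_ge0_le0 // ltW.
    apply: sumr_ge0 => i _; rewrite mulr_ge0 //.
    by rewrite -sqnorm_S; apply: sumr_ge0 => k _; apply: sqr_ge0.
have hQ0 : forall k : 'I_n, Q M (zf v k) = 0.
  move=> k; apply: (@psumr_eq0P _ _ xpredT (fun k : 'I_n => Q M (zf v k))) => //.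
  by apply/eqP; rewrite eq_le hS sumr_ge0.
have hMz : forall k : 'I_n, M *m zf v k = 0 by move=> k; exact: psd0.
have hproj : proj p v = \sum_(k < n) p k 0 *: zf v k.
  apply/matrixP => a j; rewrite ord1 summxE !mxE; apply: eq_bigr => k _.
  by rewrite !mxE valK.
have : M *m proj p v = 0.
  by rewrite hproj mulmx_sumr big1 // => k _; rewrite -scalemxAr hMz scaler0.
by rewrite /M mulmxBl mul_scalar_mx => /eqP; rewrite subr_eq0 => /eqP <-.
Qed.


Lemma QA0 A : Q A 0 = 0.
Proof. by rewrite /Q mulmx0 mxE. Qed.

Lemma S_pad A T m' W : (T <= m')%N ->
  S A m' (fun k => if (k < T)%N then W k else 0) = S A T W.
Proof.
move=> hT; rewrite /S (big_ord_widen m' (fun k => Q A (W k)) hT) [RHS]big_mkcond /=.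
by apply: eq_bigr => k _; case: ifP => _ //; rewrite QA0.
Qed.

Lemma carath (m : nat) (As : 'I_m -> 'M[R]_n) (m' : nat) : (m <= m')%N ->
  forall T (W : nat -> 'cV[R]_n), exists W' : nat -> 'cV[R]_n,
    forall j, S (As j) m' W' = S (As j) T W.
Proof.
move=> hm T; elim: T => [|T IH] W.
  by exists (fun _ => 0) => j; rewrite /S big_ord0 big1 // => k _; exact: QA0.
case: (leqP T.+1 m') => hT.
  by exists (fun k => if (k < T.+1)%N then W k else 0) => j; rewrite S_pad.
pose Mat : 'M[R]_(T.+1, m) := \matrix_(k, j) Q (As j) (W k).
have hK : kermx Mat != 0.
  rewrite -mxrank_eq0 mxrank_ker -lt0n subn_gt0.
  exact: leq_ltn_trans (rank_leq_col Mat) (leq_ltn_trans hm hT).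
have [i hi] : exists i, row i (kermx Mat) != 0.
  apply/existsP; move: hK; apply: contraR; rewrite negb_exists => /forallP h.
  by apply/eqP/row_matrixP => i; rewrite row0; apply/eqP; move: (h i); rewrite negbK.
set u := row i (kermx Mat) in hi.
have hu : u *m Mat = 0 by rewrite /u -row_mul mulmx_ker row0.
have [k1 hk1] : exists k1 : 'I_T.+1, u 0 k1 != 0.
  apply/existsP; move: hi; apply: contraR; rewrite negb_exists => /forallP h.
  by apply/eqP/matrixP => a b; rewrite ord1 [RHS]mxE; apply/eqP; move: (h b); rewrite negbK.
pose k0 := [arg max_(k > k1) `|u 0 k|]%O.
have hk0 : forall k, `|u 0 k| <= `|u 0 k0|.
  by rewrite /k0; case: arg_maxP => // k _ hk k' ; apply: hk.
have u0 : u 0 k0 != 0.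
  by rewrite -normr_gt0; apply: lt_le_trans (hk0 k1); rewrite normr_gt0.
pose s (k : 'I_T.+1) := 1 - u 0 k / u 0 k0.
have s0 : forall k, 0 <= s k.
  move=> k; rewrite /s subr_ge0; apply: le_trans (ler_norm _) _.
  by rewrite normf_div ler_pdivrMr ?mul1r ?normr_gt0.
have sk0 : s k0 = 0 by rewrite /s divff // subrr.
pose V (k : nat) := Num.sqrt (s (inord k)) *: W k.
pose W2 (k : nat) := V (bump k0 k).
have [W' hW'] := IH W2.
exists W' => j; rewrite hW'.
rewrite /S.
have -> : \sum_(k < T) Q (As j) (W2 k) = \sum_(k < T.+1) Q (As j) (V k).
  rewrite (bigD1_ord k0) //= /V inord_val sk0 sqrtr0 scale0r QA0 add0r.
  by apply: eq_bigr.
have -> : \sum_(k < T.+1) Q (As j) (V k)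
        = \sum_(k < T.+1) Q (As j) (W k) - (u 0 k0)^-1 * (u *m Mat) 0 j.
  rewrite [(u *m Mat) 0 j]mxE mulr_sumr -sumrB; apply: eq_bigr => k _.
  rewrite /V Qscale sqr_sqrtr // inord_val /s mxE.
  rewrite [Mat k j]mxE; ring.
by rewrite hu [X in _ * X]mxE mulr0 subr0.
Qed.


Lemma oracle (e1 e2 : rel 'I_N) (c : R) w lam (p : 'I_N -> R) :
  0 <= c -> sdp_optimal c e1 e2 w lam ->
  (forall i, 0 <= p i) -> \sum_i p i = 1 -> forall d : R, 0 < d ->
  exists z, Q 1%:M z = 1 /\ lam - d <= Q (Lw e1 e2 (fun i => c * p i)) z.
Proof.
move=> hc [_ hopt] hp hp1 d hd; apply: NNPP => H.
have hf : sdp_feasible c e1 e2 (fun i => c * p i) (lam - d).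
  split.
  - move=> x; rewrite -/(Q _ x) QB -scalemx1 QZ subr_le0.
    have hq : 0 <= Q 1%:M x by rewrite Q1 sumr_ge0 // => i _; rewrite sqr_ge0.
    move: (hq); rewrite le_eqVlt => /orP [/eqP hq0|hq'].
      have hx : x = 0.
        apply/matrixP => i j; rewrite ord1 [RHS]mxE; apply/eqP; rewrite -sqrf_eq0; apply/eqP.
        move: (esym hq0); rewrite Q1 => /psumr_eq0P; apply => // k _; exact: sqr_ge0.
      by rewrite hx !QA0 mulr0.
    set q := Q 1%:M x in hq hq'.
    have hs : 0 < Num.sqrt q by rewrite sqrtr_gt0.
    set z := (Num.sqrt q)^-1 *: x.
    have hz1 : Q 1%:M z = 1.
      by rewrite /z Qscale exprVn sqr_sqrtr // mulVf // gt_eqF.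
    have : ~ (lam - d <= Q (Lw e1 e2 (fun i => c * p i)) z) by move=> h; apply: H; exists z.
    move/negP; rewrite -ltNge /z Qscale exprVn sqr_sqrtr // => h.
    have hqi : 0 < q^-1 by rewrite invr_gt0.
    rewrite -(ler_pM2l hqi) -/q mulrCA mulVf ?mulr1 ?gt_eqF //; exact: ltW.
  - by rewrite -mulr_sumr hp1 mulr1.
  - by move=> i; rewrite mulr_ge0.
have := hopt _ _ hf; lra.
Qed.


Definition pos (a : R) : R := if a <= 0 then 0 else a.

Lemma pos_ge0 a : 0 <= pos a.
Proof. by rewrite /pos; case: ifP => // /negbT; rewrite -ltNge => /ltW. Qed.

Lemma pos_ge a : a <= pos a.
Proof. by rewrite /pos; case: ifP. Qed.

Lemma pos_le a b : 0 <= b -> a <= b -> pos a <= b.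
Proof. by move=> h0 h; rewrite /pos; case: ifP. Qed.

Lemma comp_bound (th x y al : R) : 0 <= al -> al <= 1 ->
  pos (th - ((1 - al) * x + al * y)) ^+ 2 <=
  (1 - al) ^+ 2 * pos (th - x) ^+ 2
  + 2 * al * (1 - al) * (pos (th - x) * th - pos (th - x) * y)
  + al ^+ 2 * (x + pos (th - x) - y) ^+ 2.
Proof.
move=> a0 a1.
set u := pos (th - x).
have hu : u * (x + u) = u * th.
  rewrite /u /pos; case: ifP => h.
  - by rewrite !mul0r.
  - ring.
have -> : (1 - al) ^+ 2 * u ^+ 2 + 2 * al * (1 - al) * (u * th - u * y)
          + al ^+ 2 * (x + u - y) ^+ 2
          = ((1 - al) * u + al * (x + u - y)) ^+ 2.
  rewrite -hu; ring.
set x' := (1 - al) * x + al * y.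
have hpi : th <= x + u by rewrite -lerBlDl /u pos_ge.
have heq : (1 - al) * u + al * (x + u - y) = x + u - x' by rewrite /x'; ring.
rewrite heq /pos; case: ifP => h.
- by rewrite expr0n /= sqr_ge0.
- move/negbT: h; rewrite -ltNge => h.
  have h1 : th - x' <= x + u - x' by rewrite lerD2r.
  have h0 := ltW h; nra.
Qed.

Definition nrm (A : 'M[R]_n) : R := \sum_a \sum_b `|A a b|.

Lemma nrm_ge0 A : 0 <= nrm A.
Proof. by apply: sumr_ge0 => a _; apply: sumr_ge0 => b _. Qed.

Lemma coord_le (z : 'cV[R]_n) a : z a 0 ^+ 2 <= Q 1%:M z.
Proof.
rewrite Q1 (bigD1 a) //= lerDl; apply: sumr_ge0 => i _; exact: sqr_ge0.
Qed.

Lemma Qbound A z : `|Q A z| <= nrm A * Q 1%:M z.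
Proof.
rewrite QE /nrm mulr_suml; apply: le_trans (ler_norm_sum _ _ _) _.
apply: ler_sum => a _; rewrite mulr_suml.
apply: le_trans (ler_norm_sum _ _ _) _; apply: ler_sum => b _.
have h1 := coord_le z a; have h2 := coord_le z b.
rewrite [z a 0 * _]mulrC -mulrA normrM; apply: ler_wpM2l => //.
rewrite normrM; set q := Q 1%:M z in h1 h2 *.
have ha : `|z a 0| ^+ 2 <= q by rewrite real_normK ?num_real.
have hb : `|z b 0| ^+ 2 <= q by rewrite real_normK ?num_real.
have := normr_ge0 (z a 0); have := normr_ge0 (z b 0).
nra.
Qed.

Lemma Sbound A T W : `|S A T W| <= nrm A * S 1%:M T W.
Proof.
rewrite /S mulr_sumr; apply: le_trans (ler_norm_sum _ _ _) _.
by apply: ler_sum => k _; apply: Qbound.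
Qed.


Lemma QLw_A (e1 e2 : rel 'I_N) (c : R) (p : 'I_N -> R) z : \sum_i p i = 1 ->
  Q (Lw e1 e2 (fun i => c * p i)) z =
  \sum_i p i * Q (L0 R e1 e2 + c *: Lij R (lay1 i) (lay2 i)) z.
Proof.
move=> hp; rewrite /Lw QD Qsum.
under [RHS]eq_bigr do rewrite QD QZ mulrDr.
rewrite big_split /= -mulr_suml hp mul1r addrC; congr (_ + _).
by apply: eq_bigr => i _; rewrite QZ mulrA [c * _]mulrC.
Qed.

Lemma unit_exists : (0 < N)%N -> exists z : 'cV[R]_n, Q 1%:M z = 1.
Proof.
move=> hN; exists (delta_mx (lay1 (Ordinal hN)) 0); rewrite Q1.
rewrite (bigD1 (lay1 (Ordinal hN))) //= big1 ?addr0; first by rewrite mxE !eqxx expr1n.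
by move=> i /negPf hi; rewrite mxE hi expr0n.
Qed.

Lemma blackwell (e1 e2 : rel 'I_N) (c : R) w lam (eps : R) :
  (0 < N)%N -> 0 <= c -> sdp_optimal c e1 e2 w lam -> 0 < eps ->
  exists T W, S 1%:M T W = 1 /\
    forall i, lam - eps <= S (L0 R e1 e2 + c *: Lij R (lay1 i) (lay2 i)) T W.
Proof.
move=> hN hc hopt he.
pose A i := L0 R e1 e2 + c *: Lij R (lay1 i) (lay2 i).
pose th := lam - eps / 2.
pose beta := \sum_i nrm (A i).
pose K := 3 * beta + `|th|.
pose C := N%:R * K ^+ 2.
pose x T W i := S (A i) T W.
pose D T W := \sum_i pos (th - x T W i) ^+ 2.
have hb : forall i, nrm (A i) <= beta.
  move=> i; rewrite /beta (bigD1 i) //= lerDl; apply: sumr_ge0 => j _; exact: nrm_ge0.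
have hb0 : 0 <= beta by apply: sumr_ge0 => j _; exact: nrm_ge0.
have hx : forall T W, S 1%:M T W = 1 -> forall i, `|x T W i| <= beta.
  move=> T W h1 i; apply: le_trans (Sbound _ _ _) _; rewrite h1 mulr1; exact: hb.
have hy : forall z, Q 1%:M z = 1 -> forall i, `|Q (A i) z| <= beta.
  move=> z h1 i; apply: le_trans (Qbound _ _) _; rewrite h1 mulr1; exact: hb.
have hu : forall T W, S 1%:M T W = 1 -> forall i, pos (th - x T W i) <= `|th| + beta.
  move=> T W h1 i; apply: pos_le; first by rewrite addr_ge0.
  have h2 := hx T W h1 i; have h3 := ler_norm th; have h4 := ler_norm (- x T W i).
  rewrite normrN in h4; lra.
have hDC : forall T W, S 1%:M T W = 1 -> D T W <= C.
  move=> T W h1; apply: (@le_trans _ _ (\sum_(i < N) K ^+ 2)).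
    apply: ler_sum => i _; have := hu T W h1 i; have := pos_ge0 (th - x T W i).
    have := normr_ge0 th; rewrite /K; nra.
  by rewrite sumr_const card_ord /C mulr_natl.
have [z0 hz0] := unit_exists hN.
have step : forall (t : nat) T W, S 1%:M T W = 1 -> D T W <= C / t.+1%:R ->
    exists T' W', S 1%:M T' W' = 1 /\ D T' W' <= C / t.+2%:R.
  move=> t T W h1 hD.
  pose u i := pos (th - x T W i).
  pose U := \sum_i u i.
  have hu0 : forall i, 0 <= u i by move=> i; exact: pos_ge0.
  have [z [hz1 hzU]] : exists z, Q 1%:M z = 1 /\ th * U <= \sum_i u i * Q (A i) z.
    have hU0 : 0 <= U by apply: sumr_ge0.
    move: hU0; rewrite le_eqVlt => /orP [/eqP hU|hU].
    - exists z0; split => //; rewrite -hU mulr0.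
      have h0 := @psumr_eq0P _ _ xpredT u (fun i _ => hu0 i) (esym hU).
      by rewrite big1 // => i _; rewrite h0 // mul0r.
    - pose p i := u i / U.
      have hp : forall i, 0 <= p i by move=> i; rewrite divr_ge0 // ltW.
      have hp1 : \sum_i p i = 1 by rewrite -mulr_suml divff // gt_eqF.
      have he2 : 0 < eps / 2 by rewrite divr_gt0.
      have [z [hz1 hz]] := oracle hc hopt hp hp1 he2.
      exists z; split => //.
      rewrite (QLw_A _ _ _ _ hp1) in hz.
      have -> : \sum_i u i * Q (A i) z = U * \sum_i p i * Q (A i) z.
        rewrite mulr_sumr; apply: eq_bigr => i _.
        by rewrite /p mulrA mulrCA divff ?gt_eqF // mulr1.
      by rewrite mulrC ler_wpM2l // ltW.
  pose al := (t.+2%:R : R)^-1.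
  have hal0 : 0 <= al by rewrite invr_ge0.
  have hal1 : al <= 1 by rewrite invf_le1 ?ler1n ?ltr0Sn.
  pose W' k := if (k < T)%N then Num.sqrt (1 - al) *: W k else Num.sqrt al *: z.
  have hS' : forall B, S B T.+1 W' = (1 - al) * S B T W + al * Q B z.
    move=> B; rewrite /S big_ord_recr /= /W' ltnn mulr_sumr; congr (_ + _).
      by apply: eq_bigr => k _; rewrite ltn_ord Qscale sqr_sqrtr // subr_ge0.
    by rewrite Qscale sqr_sqrtr.
  exists T.+1, W'; split; first by rewrite hS' h1 hz1; ring.
  have hD' : D T.+1 W' <= (1 - al) ^+ 2 * D T W + al ^+ 2 * C.
    apply: (@le_trans _ _ (\sum_i ((1 - al) ^+ 2 * u i ^+ 2
        + 2 * al * (1 - al) * (u i * th - u i * Q (A i) z)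
        + al ^+ 2 * (x T W i + u i - Q (A i) z) ^+ 2))).
      by apply: ler_sum => i _; rewrite /x hS'; exact: comp_bound.
    rewrite !big_split /= -!mulr_sumr.
    have h2 : \sum_i (u i * th - u i * Q (A i) z) <= 0.
      by rewrite sumrB -mulr_suml mulrC subr_le0.
    have hxy : forall i, `|x T W i + u i - Q (A i) z| <= K.
      move=> i; have := hx T W h1 i; have := hy z hz1 i; have := hu T W h1 i.
      have := hu0 i; have := normr_ge0 th; rewrite /K !ler_norml /u.
      move=> h0 hu1 hp /andP[hy1 hy2] /andP[hx1 hx2]; apply/andP; split; lra.
    have h3 : \sum_i (x T W i + u i - Q (A i) z) ^+ 2 <= C.
      apply: (@le_trans _ _ (\sum_(i < N) K ^+ 2)).
        apply: ler_sum => i _; have := hxy i.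
        rewrite -real_normK ?num_real //; have := normr_ge0 (x T W i + u i - Q (A i) z).
        nra.
      by rewrite sumr_const card_ord /C mulr_natl.
    have hc1 : 0 <= 2 * al * (1 - al) by rewrite !mulr_ge0 // subr_ge0.
    have h4 := ler_wpM2l hc1 h2; have h5 := ler_wpM2l (sqr_ge0 al) h3.
    rewrite mulr0 in h4; rewrite /D; lra.
  apply: le_trans hD' _.
  apply: (@le_trans _ _ ((1 - al) ^+ 2 * (C / t.+1%:R) + al ^+ 2 * C)).
    by rewrite lerD2r ler_wpM2l ?sqr_ge0.
  rewrite /al -natr1; set r := t.+1%:R.
  have hr : r != 0 by rewrite /r pnatr_eq0.
  have hr1 : r + 1 != 0 by rewrite natr1 pnatr_eq0.
  have -> : (1 - (r + 1)^-1) ^+ 2 * (C / r) + (r + 1)^-1 ^+ 2 * C = C / (r + 1).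
  field; have ht0 : (0:R) <= t%:R := ler0n _ _.
  by apply/andP; split; apply/negP => /eqP h; lra.
  by [].
have iter : forall t : nat, exists T W, S 1%:M T W = 1 /\ D T W <= C / t.+1%:R.
  elim=> [|t [T [W [h1 hD]]]].
  - exists 1%N, (fun _ => z0); rewrite /S big_ord1 hz0; split => //.
    by rewrite divr1; apply: hDC; rewrite /S big_ord1.
  - exact: step h1 hD.
pose t := Num.Def.archi_bound (C / (eps / 2) ^+ 2).
have [T [W [h1 hD]]] := iter t.
exists T, W; split => // i.
have he2 : 0 < eps / 2 by rewrite divr_gt0.
have hC0 : 0 <= C by rewrite /C mulr_ge0 ?sqr_ge0.
have ht := archi_boundP (divr_ge0 hC0 (ltW (exprn_gt0 2 he2))).
have hDe : D T W <= (eps / 2) ^+ 2.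
  apply: le_trans hD _; rewrite ler_pdivrMr ?ltr0Sn //.
  rewrite ltr_pdivrMr ?exprn_gt0 // in ht.
  apply: ltW; apply: lt_le_trans ht _; rewrite mulrC ler_wpM2l ?sqr_ge0 //.
  by rewrite ler_nat.
have hi : pos (th - x T W i) ^+ 2 <= (eps / 2) ^+ 2.
  apply: le_trans hDe; rewrite /D (bigD1 i) //= lerDl.
  by apply: sumr_ge0 => j _; exact: sqr_ge0.
have := pos_ge (th - x T W i); have := pos_ge0 (th - x T W i).
rewrite /th /x /A in hi *; nra.
Qed.


Lemma strong (e1 e2 : rel 'I_N) (c : R) w lam xi (v : 'I_n -> 'cV[R]_n) :
  0 <= c -> sdp_optimal c e1 e2 w lam -> emb_optimal c e1 e2 xi v ->
  lam <= emb_obj c e1 e2 xi v.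
Proof.
move=> hc hopt [[hxi hv1] hvopt].
have hN : (0 < N)%N.
  have [a _] : exists a : 'I_n, true && (0 < sqnorm (v a)).
    apply: psumr_neq0P; last by rewrite hv1; apply/eqP; rewrite oner_neq0.
    by move=> a _; apply: sumr_ge0 => k _; exact: sqr_ge0.
  have h : (val a < N + N)%N := ltn_ord a; move: (val a) h => k h.
  by rewrite lt0n; apply/eqP => hN0; rewrite hN0 in h.
apply/ler_addgt0Pr => eps he.
pose A i := L0 R e1 e2 + c *: Lij R (lay1 i) (lay2 i).
have [T [W [h1 hA]]] := blackwell hN hc hopt he.
pose As (j : 'I_(N + 1)) := match split j with inl i => A i | inr _ => 1%:M end.
have hm : (N + 1 <= n)%N by rewrite leq_add2l.
have [W' hW'] := carath As hm T W.
have h1' : S 1%:M n W' = 1.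
  by have := hW' (rshift N (ord0 : 'I_1)); rewrite /As -/(unsplit (inr _)) unsplitK h1.
have hA' : forall i, lam - eps <= S (A i) n W'.
  by move=> i; have := hW' (lshift 1 i); rewrite /As -/(unsplit (inl _)) unsplitK => ->; exact: hA.
pose v' := ve W'.
have hL : forall i, S (Lij R (lay1 i) (lay2 i)) n W' = sqnorm (v' (lay1 i) - v' (lay2 i)).
  by move=> i; rewrite sqnorm_S S_ve.
have hsq : \sum_a sqnorm (v' a) = 1 by rewrite sqnorm_sum S_ve.
have hobj : forall xi', emb_obj c e1 e2 xi' v' = c * xi' + S (L0 R e1 e2) n W'.
  by move=> xi'; rewrite /emb_obj -S_L0 S_ve.
have hAi : forall i, S (A i) n W' = S (L0 R e1 e2) n W' + c * S (Lij R (lay1 i) (lay2 i)) n W'.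
  by move=> i; rewrite /A SD SZ.
have hsq0 : forall i, 0 <= sqnorm (v' (lay1 i) - v' (lay2 i)).
  by move=> i; apply: sumr_ge0 => k _; exact: sqr_ge0.
move: hc; rewrite le_eqVlt => /orP [/eqP hc0|hcp].
- have := hvopt 0 v' (conj (fun i => hsq0 i) hsq).
  rewrite hobj -hc0 mul0r add0r => hle.
  have := hA' (Ordinal hN); rewrite hAi -hc0 mul0r addr0 => h.
  have := le_trans h hle; lra.
- pose xi' := (lam - eps - S (L0 R e1 e2) n W') / c.
  have hf : emb_feasible e1 e2 xi' v'.
    split => // i; rewrite -hL /xi' ler_pdivrMr //.
    have := hA' i; rewrite hAi; lra.
  have := hvopt xi' v' hf; rewrite hobj /xi' mulrC divfK ?gt_eqF //; lra.
Qed.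

End Aux.

Theorem proposition5 (R : realType) (N : nat) (e1 e2 : rel 'I_N)
    (e1_sym : symmetric e1) (e1_irr : irreflexive e1)
    (e2_sym : symmetric e2) (e2_irr : irreflexive e2)
    (c : R) (hc : 0 <= c)
    (wstar : 'I_N -> R) (lamstar : R)
    (hw : sdp_optimal c e1 e2 wstar lamstar)
    (xi : R) (v : 'I_(N + N) -> 'cV[R]_(N + N))
    (hv : emb_optimal c e1 e2 xi v) :
  forall p : 'cV[R]_(N + N),
    Lw e1 e2 wstar *m proj p v = lamstar *: proj p v.
Proof.
move=> p; apply: (stepA _ hc hw.1 hv.1).
exact: strong hc hw hv.
Qed.
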